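(* Let $q_1,\dots,q_n,q,p\in F(V)$. Then: (1) if $q_1,\dots,q_n\vdash_{\L^*}q$, then $q_1,\dots,q_n\vdash_{\mathrm{sq}\L^*}(p\to p)\to q$; (2) if $q$ is regular, then $(p\to p)\to q\vdash_{\mathrm{sq}\L^*}q$.
   Context: Let $V$ be a set of propositional variables and $F(V)$ the set of formulas built from $V$ and the constant $1$ using $\to$ and $\neg$. Abbreviations: $p^+:=(p\to 1)\to 1$, $p^-:=(p\to\neg 1)\to\neg 1$ (binding more tightly than $\neg$), $p\vee q:=((p^+\to q^+)^+\to(\neg p)^-)\to((q^-\to p^-)^-\to p^-)$; an axiom ''$p\leftrightarrow q$'' stands for the two axioms $p\to q$ and $q\to p$. A formula is regular if it contains an occurrence of $\to$ or of $1$. The logic $\L^*$ has axiom schemas: (P1) $(p\to q)\leftrightarrow(\neg q\to\neg p)$; (P2) $p\leftrightarrow((q\to q)\to p)$; (P3) $\neg(p\to q)\leftrightarrow(q\to p)$; (P4) $p\to 1$; (P5) $1\leftrightarrow((1\to p)\to 1)$; (P6) $((p\to 1)\to((q\to 1)\to r))\to((q\to 1)\to((p\to 1)\to r))$; (P7) $(p\to q)\leftrightarrow((q^+\to p^-)\to(p^+\to q^-))$; (P8) $(p\to(\neg p\to q))^+\leftrightarrow(p^+\to(\neg p^+\to q^+))$; (P9) $(p\to(q\vee r))\leftrightarrow((p\to r)\vee(p\to q))$; (P10) $(p\vee(q\vee r))\leftrightarrow((p\vee q)\vee r)$; and rules (R1) from $p$ and $p\to q$ infer $q$; (R2) from $p\to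 q$ and $r\to t$ infer $(q\to r)\to(p\to t)$; (R3) from $p$ infer $p^-$. The logic $\mathrm{sq}\L^*$ has axiom schemas (Q1) $(p\to q)\leftrightarrow(\neg q\to\neg p)$; (Q2) $1\leftrightarrow((1\to p)\to 1)$; (Q3) $p\leftrightarrow((q\to q)\to p)$; (Q4) $(p\to q)\leftrightarrow((q^+\to p^-)\to(p^+\to q^-))$; (Q5) $\neg(p\to q)\leftrightarrow(q\to p)$; (Q6) $(p\to(\neg p\to q))^+\leftrightarrow(p^+\to(\neg p^+\to q^+))$; (Q7) $(p\to(q\vee r))\leftrightarrow((p\to r)\vee(p\to q))$; (Q8) $(p\vee(q\vee r))\leftrightarrow((p\vee q)\vee r)$; (Q9) $((p\to 1)\to((q\to 1)\to r))\to((q\to 1)\to((p\to 1)\to r))$; (Q10) $p\to 1$; and rules: (qMP) from $(r\to r)\to p$ and $(r\to r)\to(p\to q)$ infer $(r\to r)\to q$; (Reg) from $p$ infer $(r\to r)\to p$; (AReg1) from $(r\to r)\to(p\to q)$ infer $p\to q$; (AReg2) from $(r\to r)\to\neg(p\to q)$ infer $\neg(p\to q)$; (AReg3) from $(r\to r)\to\neg 1$ infer $\neg 1$; (AReg4) from $(r\to r)\to 1$ infer $1$; (Inv1) from $p$ infer $\neg\neg p$; (Inv2) from $\neg\neg p$ infer $p$; (Flat) from $p$ and $\neg 1$ infer $\neg p$; (R2$'$) from $p\to q$ and $r\to t$ infer $(q\to r)\to(p\to t)$; (R3$'$) from $(r\to r)\to p$ infer $p^-$. For a logic $L\in\{\L^*,\mathrm{sq}\L^*\}$,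 $q_1,\dots,q_n\vdash_L q$ means there is a finite sequence of formulas ending with $q$ in which each member is an axiom instance of $L$, one of the $q_i$, or follows from earlier members by a rule of $L$. *)

(* Defs.v *)
From Stdlib Require Import List.
Import ListNotations.

Set Implicit Arguments.

Inductive form (V : Type) : Type :=
| Var : V -> form V
| One : form V
| Imp : form V -> form V -> form V
| Neg : form V -> form V.

Arguments Var {V} _.
Arguments One {V}.
Arguments Imp {V} _ _.
Arguments Neg {V} _.

Section Abbrev.
Variable V : Type.
Implicit Types p q r t : form V.

Definition fplus p : form V := Imp (Imp p One) One.
Definition fminus p : form V := Imp (Imp p (Neg One)) (Neg One).
Definition fvee p q : form V :=
  Imp (Imp (fplus (Imp (fplus p) (fplus q))) (fminus (Neg p)))
      (Imp (fminus (Imp (fminus q) (fminus p))) (fminus p)).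

Fixpoint regular p : Prop :=
  match p with
  | Var _ => False
  | One => True
  | Imp _ _ => True
  | Neg a => regular a
  end.

(* "a <-> b" stands for the two axioms a -> b and b -> a *)
Definition biax (a b c : form V) : Prop := c = Imp a b \/ c = Imp b a.

Definition axiomL (c : form V) : Prop :=
  (exists p q, biax (Imp p q) (Imp (Neg q) (Neg p)) c)
  \/ (exists p q, biax p (Imp (Imp q q) p) c)
  \/ (exists p q, biax (Neg (Imp p q)) (Imp q p) c)
  \/ (exists p, c = Imp p One)
  \/ (exists p, biax One (Imp (Imp One p) One) c)
  \/ (exists p q r, c = Imp (Imp (Imp p One) (Imp (Imp q One) r))
                            (Imp (Imp q One) (Imp (Imp p One) r)))
  \/ (exists p q, biax (Imp p q)
                       (Imp (Imp (fplus q) (fminus p)) (Imp (fplus p) (fminus q))) c)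
  \/ (exists p q, biax (fplus (Imp p (Imp (Neg p) q)))
                       (Imp (fplus p) (Imp (Neg (fplus p)) (fplus q))) c)
  \/ (exists p q r, biax (Imp p (fvee q r)) (fvee (Imp p r) (Imp p q)) c)
  \/ (exists p q r, biax (fvee p (fvee q r)) (fvee (fvee p q) r) c).

Definition axiomSQ (c : form V) : Prop :=
  (exists p q, biax (Imp p q) (Imp (Neg q) (Neg p)) c)
  \/ (exists p, biax One (Imp (Imp One p) One) c)
  \/ (exists p q, biax p (Imp (Imp q q) p) c)
  \/ (exists p q, biax (Imp p q)
                       (Imp (Imp (fplus q) (fminus p)) (Imp (fplus p) (fminus q))) c)
  \/ (exists p q, biax (Neg (Imp p q)) (Imp q p) c)
  \/ (exists p q, biax (fplus (Imp p (Imp (Neg p) q)))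
                       (Imp (fplus p) (Imp (Neg (fplus p)) (fplus q))) c)
  \/ (exists p q r, biax (Imp p (fvee q r)) (fvee (Imp p r) (Imp p q)) c)
  \/ (exists p q r, biax (fvee p (fvee q r)) (fvee (fvee p q) r) c)
  \/ (exists p q r, c = Imp (Imp (Imp p One) (Imp (Imp q One) r))
                            (Imp (Imp q One) (Imp (Imp p One) r)))
  \/ (exists p, c = Imp p One).

Inductive derL (hyps : list (form V)) : form V -> Prop :=
| L_ax : forall c, axiomL c -> derL hyps c
| L_hyp : forall c, In c hyps -> derL hyps c
| L_R1 : forall p q, derL hyps p -> derL hyps (Imp p q) -> derL hyps q
| L_R2 : forall p q r t, derL hyps (Imp p q) -> derL hyps (Imp r t) ->
           derL hyps (Imp (Imp q r) (Imp p t))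
| L_R3 : forall p, derL hyps p -> derL hyps (fminus p).

Inductive derSQ (hyps : list (form V)) : form V -> Prop :=
| SQ_ax : forall c, axiomSQ c -> derSQ hyps c
| SQ_hyp : forall c, In c hyps -> derSQ hyps c
| SQ_qMP : forall p q r, derSQ hyps (Imp (Imp r r) p) ->
             derSQ hyps (Imp (Imp r r) (Imp p q)) -> derSQ hyps (Imp (Imp r r) q)
| SQ_Reg : forall p r, derSQ hyps p -> derSQ hyps (Imp (Imp r r) p)
| SQ_AReg1 : forall p q r, derSQ hyps (Imp (Imp r r) (Imp p q)) -> derSQ hyps (Imp p q)
| SQ_AReg2 : forall p q r, derSQ hyps (Imp (Imp r r) (Neg (Imp p q))) ->
               derSQ hyps (Neg (Imp p q))
| SQ_AReg3 : forall r, derSQ hyps (Imp (Imp r r) (Neg One)) -> derSQ hyps (Neg One)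
| SQ_AReg4 : forall r, derSQ hyps (Imp (Imp r r) One) -> derSQ hyps One
| SQ_Inv1 : forall p, derSQ hyps p -> derSQ hyps (Neg (Neg p))
| SQ_Inv2 : forall p, derSQ hyps (Neg (Neg p)) -> derSQ hyps p
| SQ_Flat : forall p, derSQ hyps p -> derSQ hyps (Neg One) -> derSQ hyps (Neg p)
| SQ_R2' : forall p q r t, derSQ hyps (Imp p q) -> derSQ hyps (Imp r t) ->
             derSQ hyps (Imp (Imp q r) (Imp p t))
| SQ_R3' : forall p r, derSQ hyps (Imp (Imp r r) p) -> derSQ hyps (fminus p).

End Abbrev.

(* Main.v *)
Require Import Defs.
From Stdlib Require Import List.
Import ListNotations.

Section S.
Variable V : Type.
Variable D : list (form V).
Notation d := (derSQ D).

Lemma q1a (p q : form V) : d (Imp (Imp p q) (Imp (Neg q) (Neg p))).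
Proof. apply SQ_ax; left; exists p, q; left; reflexivity. Qed.
Lemma q2a (p : form V) : d (Imp One (Imp (Imp One p) One)).
Proof. apply SQ_ax; right; left; exists p; left; reflexivity. Qed.
Lemma q2b (p : form V) : d (Imp (Imp (Imp One p) One) One).
Proof. apply SQ_ax; right; left; exists p; right; reflexivity. Qed.
Lemma q3a (p q : form V) : d (Imp p (Imp (Imp q q) p)).
Proof. apply SQ_ax; right; right; left; exists p, q; left; reflexivity. Qed.
Lemma q3b (p q : form V) : d (Imp (Imp (Imp q q) p) p).
Proof. apply SQ_ax; right; right; left; exists p, q; right; reflexivity. Qed.
Lemma q5a (p q : form V) : d (Imp (Neg (Imp p q)) (Imp q p)).
Proof. apply SQ_ax; do 4 right; left; exists p, q; left; reflexivity. Qed.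
Lemma q5b (p q : form V) : d (Imp (Imp q p) (Neg (Imp p q))).
Proof. apply SQ_ax; do 4 right; left; exists p, q; right; reflexivity. Qed.

Lemma tmp (r P Q : form V) : d P -> d (Imp P Q) -> d (Imp (Imp r r) Q).
Proof. intros H1 H2; apply (SQ_qMP (p:=P)); apply SQ_Reg; assumption. Qed.

Lemma tmpT (r X Y : form V) : d (Imp (Imp r r) X) -> d (Imp X Y) -> d (Imp (Imp r r) Y).
Proof. intros; eapply SQ_qMP; [eauto| apply SQ_Reg; eauto]. Qed.

Lemma mpi (P X Y : form V) : d P -> d (Imp P (Imp X Y)) -> d (Imp X Y).
Proof. intros H1 H2. apply (SQ_AReg1 (r:=P)). exact (tmp P P _ H1 H2). Qed.

Lemma idd (s : form V) : d (Imp s s).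
Proof.
  apply (SQ_AReg1 (r:=s)).
  eapply SQ_qMP; [apply (q3a (Imp s s) s) | apply SQ_Reg; apply q3b].
Qed.

Lemma comp (X Y Z : form V) : d (Imp X Y) -> d (Imp Y Z) -> d (Imp X Z).
Proof.
  intros. eapply mpi; [exact H|]. apply SQ_R2'; [apply idd | exact H0].
Qed.

Lemma contra (X Y : form V) : d (Imp X Y) -> d (Imp (Neg Y) (Neg X)).
Proof. intros; eapply mpi; [exact H| apply q1a]. Qed.

Definition G (c : form V) := d (Imp c (Neg (Neg c))) /\ d (Imp (Neg (Neg c)) c).

Lemma G_imp (x y : form V) : G (Imp x y).
Proof.
  split.
  - eapply comp; [apply (q5b y x)|]. apply contra, q5a.
  - eapply comp; [apply contra, (q5b x y)|]. apply q5a.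
Qed.

Lemma G_tr (c e : form V) : d (Imp c e) -> d (Imp e c) -> G e -> G c.
Proof.
  intros H1 H2 [H3 H4]; split.
  - eapply comp; [exact H1|]. eapply comp; [exact H3|]. apply contra, contra, H2.
  - eapply comp; [apply contra, contra, H1|]. eapply comp; [exact H4|exact H2].
Qed.

Lemma G_neg (c : form V) : G c -> G (Neg c).
Proof. intros [H1 H2]; split; apply contra; assumption. Qed.

Lemma G_reg (c : form V) : regular c -> G c.
Proof.
  induction c; simpl; intros; try contradiction.
  - eapply G_tr; [apply (q2a One) | apply q2b | apply G_imp].
  - apply G_imp.
  - apply G_neg; auto.
Qed.

Lemma strip (q : form V) : regular q -> forall r,
  (d (Imp (Imp r r) q) -> d q) /\ (d (Imp (Imp r r) (Neg q)) -> d (Neg q)).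
Proof.
  induction q; simpl; intros Hr r; try contradiction.
  - split; intro H; [eapply SQ_AReg4 | eapply SQ_AReg3]; eauto.
  - split; intro H; [eapply SQ_AReg1 | eapply SQ_AReg2]; eauto.
  - destruct (IHq Hr r) as [H1 H2]. split; [exact H2|].
    intro H. apply SQ_Inv1. apply H1. eapply tmpT; [exact H|].
    apply (G_reg _ Hr).
Qed.
End S.

Theorem lemma4p1 (V : Type) (qs : list (form V)) (q p : form V) :
  (derL qs q -> derSQ qs (Imp (Imp p p) q)) /\
  (regular q -> derSQ [Imp (Imp p p) q] q).
Proof.
  split.
  - intro H; induction H.
    + apply SQ_Reg, SQ_ax. unfold axiomL, axiomSQ in *.
      destruct H as [H|[H|[H|[H|[H|[H|[H|[H|[H|H]]]]]]]]]; [left|do 2 right; left|do 4 right; left|do 9 right|right;left|do 8 right; left|do 3 right; left|do 5 right; left|do 6 right; left|do 7 right; left]; exact H.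
    + apply SQ_Reg, SQ_hyp; assumption.
    + apply (SQ_qMP (p:=p0)); assumption.
    + apply SQ_Reg, SQ_R2'; [apply (SQ_AReg1 IHderL1) | apply (SQ_AReg1 IHderL2)].
    + apply SQ_Reg; eapply SQ_R3'; eauto.
  - intro Hr. apply (proj1 (strip _ _ _ Hr p)). apply SQ_hyp; left; reflexivity.
Qed.
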